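(* Let $n\ge1$, $F_1,\dots,F_n:\mathbb{R}^d\to\mathbb{R}^d$, $F=\frac1n\sum_iF_i$, with $F$ $\mu$-strongly monotone ($\mu>0$) and each $F_i$ $L_i$-Lipschitz; let $z_*$ be the solution of $F(z_* )=0$, $L_{max}=\max_iL_i$, $\sigma_*^2=\frac1n\sum_i\|F_i(z_* )\|^2$. Consider the iterates $z_0^k$ of SEG-SO (defined in the context) started at $z_0$. 1. If $\gamma_2=2\gamma_1$ and $\gamma_1\le\frac{\mu}{10L_{max}^2\sqrt{10n^2+2n+54}}$, then $$\mathbb{E}\|z_0^k-z_*\|^2\le\Big(1-\frac{\gamma_1n\mu}{4}\Big)^k\|z_0-z_*\|^2+\frac{96L_{max}^2}{\mu^2}\big[(25+n)\gamma_1^2+\gamma_2^2\big]\sigma_*^2.$$ 2. If SEG-SO is run for $K$ epochs with $\gamma_2=2\gamma_1$ and $\gamma_1=\min\Big\{\frac{\mu}{10L_{max}^2\sqrt{10n^2+2n+54}},\frac{4\log(n^{1/2}K)}{\mu nK}\Big\}$, then $$\mathbb{E}\|z_0^K-z_*\|^2=\tilde{\mathcal{O}}\Big(e^{-\frac{\mu^2K}{L_{max}^2}}+\frac1{nK^2}\Big).$$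
   Context: $\mu$-strongly monotone: $\langle F(z_1)-F(z_2),z_1-z_2\rangle\ge\mu\|z_1-z_2\|^2$. SEG-SO (shuffle once) with step sizes $\gamma_1,\gamma_2>0$: draw one permutation $\pi$ of $\{1,\dots,n\}$ uniformly at random at the start; set $z_0^0=z_0$; for each epoch $k=0,1,\dots$ and $i=0,\dots,n-1$ set $\bar z_i^k=z_i^k-\gamma_2F_{\pi_i}(z_i^k)$, $z_{i+1}^k=z_i^k-\gamma_1F_{\pi_i}(\bar z_i^k)$; then $z_0^{k+1}=z_n^k$. $\mathbb{E}$ is expectation over $\pi$. $\tilde{\mathcal{O}}$ suppresses constant and logarithmic factors. *)

(* Defs.v *)
From HB Require Import structures.
From mathcomp Require Import all_boot all_order all_fingroup all_algebra.
From mathcomp Require Import reals sequences exp.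
Set Implicit Arguments. Unset Strict Implicit. Unset Printing Implicit Defensive.
Import Order.TTheory GRing.Theory Num.Theory.
Local Open Scope ring_scope.

Section SEG.
Variables (R : realType) (n d : nat).
Notation V := 'rV[R]_d.

Definition dotv (u v : V) : R := \sum_(j < d) u 0 j * v 0 j.
Definition sqnorm (v : V) : R := dotv v v.
Definition enorm (v : V) : R := Num.sqrt (sqnorm v).

Definition Favg (F : 'I_n -> V -> V) (z : V) : V :=
  n%:R^-1 *: \sum_(i < n) F i z.

Definition strongly_monotone (G : V -> V) (mu : R) : Prop :=
  forall z1 z2 : V, mu * sqnorm (z1 - z2) <= dotv (G z1 - G z2) (z1 - z2).

Definition lipschitz (G : V -> V) (L : R) : Prop :=
  forall z1 z2 : V, enorm (G z1 - G z2) <= L * enorm (z1 - z2).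

Definition Lmax (L : 'I_n -> R) : R := \big[Num.max/0]_(i < n) L i.

Definition sigma2 (F : 'I_n -> V -> V) (zs : V) : R :=
  n%:R^-1 * \sum_(i < n) sqnorm (F i zs).

Definition seg_setting (F : 'I_n -> V -> V) (L : 'I_n -> R) (mu : R) (zs : V)
  : Prop :=
  [/\ (0 < n)%N, 0 < mu, strongly_monotone (Favg F) mu,
      (forall i, lipschitz (F i) (L i)) & Favg F zs = 0].

Definition seg_step (F : 'I_n -> V -> V) (g1 g2 : R) (j : 'I_n) (z : V) : V :=
  let zb := z - g2 *: F j z in z - g1 *: F j zb.

Definition seg_epoch (F : 'I_n -> V -> V) (g1 g2 : R) (pi : 'S_n) (z : V) : V :=
  foldl (fun z i => seg_step F g1 g2 (pi i) z) z (enum 'I_n).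

(* z_0^k for SEG-SO: the permutation pi is drawn once and reused *)
Definition segso_iter (F : 'I_n -> V -> V) (g1 g2 : R) (pi : 'S_n) (z0 : V)
  (k : nat) : V := iter k (seg_epoch F g1 g2 pi) z0.

(* expectation over a uniformly random permutation pi of 'I_n *)
Definition Eperm (X : 'S_n -> R) : R :=
  (\sum_(pi : 'S_n) X pi) / #|{perm 'I_n}|%:R.

End SEG.

(* Main.v *)
Require Import Defs.
From HB Require Import structures.
From mathcomp Require Import all_boot all_order all_fingroup all_algebra.
From mathcomp Require Import reals sequences exp.
From mathcomp Require Import ring lra.
Import Order.TTheory GRing.Theory Num.Theory.
Local Open Scope ring_scope.
Set Implicit Arguments. Unset Strict Implicit. Unset Printing Implicit Defensive.

Section Vec.
Variables (R : realType) (d : nat).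
Notation V := 'rV[R]_d.

Lemma dotvC (u v : V) : dotv u v = dotv v u.
Proof. by apply: eq_bigr => j _; rewrite mulrC. Qed.

Lemma dotvDl (u v w : V) : dotv (u + v) w = dotv u w + dotv v w.
Proof. by rewrite /dotv -big_split; apply: eq_bigr => j _; rewrite mxE mulrDl. Qed.

Lemma dotvZl (k : R) (u w : V) : dotv (k *: u) w = k * dotv u w.
Proof. by rewrite /dotv mulr_sumr; apply: eq_bigr => j _; rewrite mxE mulrA. Qed.

Lemma dotvNl (u w : V) : dotv (- u) w = - dotv u w.
Proof. by rewrite -scaleN1r dotvZl mulN1r. Qed.

Lemma dotvDr (u v w : V) : dotv w (u + v) = dotv w u + dotv w v.
Proof. by rewrite dotvC dotvDl !(dotvC w). Qed.

Lemma dotvZr (k : R) (u w : V) : dotv w (k *: u) = k * dotv w u.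
Proof. by rewrite dotvC dotvZl dotvC. Qed.

Lemma dotvNr (u w : V) : dotv w (- u) = - dotv w u.
Proof. by rewrite dotvC dotvNl dotvC. Qed.

Lemma dotv0l (w : V) : dotv 0 w = 0.
Proof. by rewrite /dotv big1 // => j _; rewrite mxE mul0r. Qed.

Lemma dotv_suml (I : Type) (s : seq I) (P : pred I) (f : I -> V) (w : V) :
  dotv (\sum_(i <- s | P i) f i) w = \sum_(i <- s | P i) dotv (f i) w.
Proof.
elim: s => [|a s IH]; first by rewrite !big_nil dotv0l.
by rewrite !big_cons; case: (P a) => //; rewrite dotvDl IH.
Qed.

Lemma sqnorm_ge0 (v : V) : 0 <= sqnorm v.
Proof. by apply: sumr_ge0 => j _; rewrite -expr2 sqr_ge0. Qed.

Lemma sqnormD (u v : V) : sqnorm (u + v) = sqnorm u + 2 * dotv u v + sqnorm v.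
Proof. rewrite /sqnorm !dotvDl !dotvDr (dotvC v u); ring. Qed.

Lemma sqnormN (v : V) : sqnorm (- v) = sqnorm v.
Proof. by rewrite /sqnorm dotvNl dotvNr opprK. Qed.

Lemma sqnormZ (k : R) (v : V) : sqnorm (k *: v) = k ^+ 2 * sqnorm v.
Proof. by rewrite /sqnorm dotvZl dotvZr mulrA expr2. Qed.

Lemma sqnormB (u v : V) : sqnorm (u - v) = sqnorm u - 2 * dotv u v + sqnorm v.
Proof. by rewrite sqnormD sqnormN dotvNr; ring. Qed.

Lemma young (e : R) (u v : V) : 0 < e -> 2 * e * dotv u v <= e ^+ 2 * sqnorm u + sqnorm v.
Proof.
move=> e0; have := sqnorm_ge0 (e *: u - v).
rewrite sqnormB sqnormZ dotvZl; lra.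
Qed.

Lemma young1 (u v : V) : 2 * dotv u v <= sqnorm u + sqnorm v.
Proof. by have := young u v ltr01; rewrite expr1n !mulr1 mul1r. Qed.

Lemma sqnormD2 (u v : V) : sqnorm (u + v) <= 2 * sqnorm u + 2 * sqnorm v.
Proof. rewrite sqnormD; have := young1 u v; lra. Qed.

Lemma sqnormD3 (u v w : V) :
  sqnorm (u + v + w) <= 3 * sqnorm u + 3 * sqnorm v + 3 * sqnorm w.
Proof.
rewrite !sqnormD dotvDl; have := young1 u v; have := young1 u w; have := young1 v w.
lra.
Qed.

Lemma sqnormDe (e : R) (u v : V) : 0 < e ->
  e * sqnorm (u + v) <= e * (1 + e) * sqnorm u + (1 + e) * sqnorm v.
Proof.
move=> e0; rewrite sqnormD; have := young u v e0.
have := sqnorm_ge0 u; have := sqnorm_ge0 v; nra.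
Qed.

Lemma sqnorm_sum (m : nat) (f : 'I_m -> V) :
  sqnorm (\sum_(i < m) f i) <= m%:R * \sum_(i < m) sqnorm (f i).
Proof.
elim: m f => [|m IH] f; first by rewrite !big_ord0 mul0r /sqnorm dotv0l.
rewrite !big_ord_recr /=.
case: m IH f => [|m] IH f.
  by rewrite !big_ord0 !add0r mul1r.
set S := \sum_(i < m.+1) f (widen_ord _ i).
set T := \sum_(i < m.+1) sqnorm (f (widen_ord _ i)).
have HS : sqnorm S <= m.+1%:R * T by apply: IH.
have e0 : 0 < m.+1%:R :> R by rewrite ltr0n.
have := sqnormDe (f ord_max) S e0.
have := sqnorm_ge0 (f ord_max).
rewrite -[m.+2]addn1 natrD.
set e := m.+1%:R in e0 HS *.
move=> h1 h2.
have : e * sqnorm (S + f ord_max) <= e * ((e + 1) * (T + sqnorm (f ord_max))).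
  rewrite addrC; apply: (le_trans h2). nra.
by rewrite ler_pM2l.
Qed.

End Vec.

Lemma arithU (R : realFieldType) (a s SV U q b m : R) :
  0 <= a -> a <= s -> s <= 1/900 -> 0 <= SV -> 0 <= U -> 0 <= q -> 0 <= b -> 0 <= m ->
  U <= (3 + 24 * a) * SV + 12 * b + 24 * a * m ->
  SV <= 2 * q + 4 * s * (U + m) ->
  U <= 16 * q + 24 * b + 80 * s * m.
Proof.
move=> a0 as_ s9 SV0 U0 q0 b0 m0 h1 h2.
have a9 : a <= 1/900 by lra.
have e1 : a * SV <= SV / 900.
  have h : 0 <= 1/900 - a by lra.
  have := mulr_ge0 h SV0; lra.
have e2 : a * m <= s * m by rewrite ler_wpM2r.
have e3 : s * U <= U / 900.
  have h : 0 <= 1/900 - s by lra.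
  have := mulr_ge0 h U0; lra.
lra.
Qed.

Lemma arithF (R : realFieldType) (x s r2 c W sq sA T : R) :
  0 < x -> x <= 1/30 -> 0 <= s -> s <= x / 30 -> 0 <= r2 -> 0 <= c -> 0 <= W -> 0 <= sA ->
  x * sq <= x * (1 + x) * sA + (1 + x) * T ->
  sA <= (1 - 2 * x + s) * r2 ->
  T <= c * W + 80 * s ^+ 2 * r2 ->
  x * sq <= x * ((1 - x / 2) * r2) + 2 * c * W.
Proof.
move=> x0 x1 s0 sx r0 c0 W0 sA0 h1 h2 h3.
have x0' : 0 <= x by lra.
have e1 : x * (1 + x) * sA <= x * (1 + x) * ((1 - 2 * x + s) * r2).
  by apply: ler_wpM2l => //; apply: mulr_ge0 => //; lra.
have e2 : (1 + x) * T <= (1 + x) * (c * W + 80 * s ^+ 2 * r2).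
  by apply: ler_wpM2l => //; lra.
have cW : 0 <= c * W by apply: mulr_ge0.
have f1 : x * (c * W) <= (c * W) / 30.
  have h : 0 <= 1/30 - x by lra.
  have := mulr_ge0 h cW; lra.
have xr : 0 <= x * r2 by apply: mulr_ge0.
have x2r : 0 <= x * x * r2 by apply: mulr_ge0 => //; apply: mulr_ge0.
have x3r : 0 <= x * x * x * r2 by apply: mulr_ge0 => //; apply: mulr_ge0 => //; apply: mulr_ge0.
have f2 : s * (x * r2) <= x / 30 * (x * r2) by apply: ler_wpM2r.
have f3 : s * (x * x * r2) <= x / 30 * (x * x * r2) by apply: ler_wpM2r.
have f3' : x * (x * x * r2) <= 1/30 * (x * x * r2) by apply: ler_wpM2r.
have s2r : 0 <= s * s * r2 by apply: mulr_ge0 => //; apply: mulr_ge0.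
have f4 : s * (s * r2) <= x / 30 * (s * r2) by apply: ler_wpM2r => //; apply: mulr_ge0.
have f4' : s * (x * r2) <= x / 30 * (x * r2) by apply: ler_wpM2r.
have f5 : x * (s * s * r2) <= 1/30 * (s * s * r2) by apply: ler_wpM2r.
lra.
Qed.

Section Epoch.
Variables (R : realType) (d : nat).
Notation V := 'rV[R]_d.

Definition stepG (H : V -> V) (g : R) (z : V) : V := z - g *: H (z - (2 * g) *: H z).

Fixpoint zi (G : nat -> V -> V) (g : R) (z0 : V) (j : nat) : V :=
  if j is j'.+1 then stepG (G j') g (zi G g z0 j') else z0.

Definition wi G g z0 j := zi G g z0 j - (2 * g) *: G j (zi G g z0 j).

Lemma zi_sum G g z0 j : zi G g z0 j - z0 = - (g *: \sum_(l < j) G l (wi G g z0 l)).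
Proof.
elim: j => [|j IH]; first by rewrite big_ord0 scaler0 oppr0 subrr.
rewrite big_ord_recr /= scalerDr opprD -IH /stepG /wi.
by rewrite addrAC.
Qed.

Lemma sum_prefix_le (f : nat -> R) j n : (j <= n)%N -> (forall l, 0 <= f l) ->
  \sum_(l < j) f l <= \sum_(l < n) f l.
Proof.
move=> jn f0; rewrite -!(big_mkord xpredT) (big_cat_nat (leq0n j) jn) /=.
by rewrite lerDl sumr_ge0.
Qed.

Lemma sum_const_ord (n : nat) (c : R) : \sum_(l < n) c = n%:R * c.
Proof. by rewrite sumr_const card_ord mulr_natl. Qed.


Lemma lerE (x y : R) : x = y -> x <= y.
Proof. by move->. Qed.

Lemma epoch_bound (G : nat -> V -> V) (g mu L : R) (Fav : V -> V) (z0 zs : V) (n : nat) :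
  (0 < n)%N -> 0 < g -> 0 < mu -> mu <= L -> 30 * g * n%:R * L ^+ 2 <= mu ->
  (forall j x y, sqnorm (G j x - G j y) <= L ^+ 2 * sqnorm (x - y)) ->
  (forall z, \sum_(j < n) G j z = n%:R *: Fav z) ->
  (forall a b, mu * sqnorm (a - b) <= dotv (Fav a - Fav b) (a - b)) ->
  (forall a b, sqnorm (Fav a - Fav b) <= L ^+ 2 * sqnorm (a - b)) ->
  Fav zs = 0 ->
  sqnorm (zi G g z0 n - zs) <= (1 - g * n%:R * mu / 2) * sqnorm (z0 - zs)
    + 2 * g ^+ 4 * n%:R * L ^+ 2 *
      (16 * \sum_(j < n) sqnorm (\sum_(l < j) G l zs)
       + 24 * \sum_(j < n) sqnorm (G j zs)) / (g * n%:R * mu).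
Proof.
move=> n0 g0 mu0 muL Hstep HL Hsum Hmono HFL Hzs.
set r2 := sqnorm (z0 - zs).
set P := fun j => sqnorm (wi G g z0 j - z0).
set Vj := fun j => sqnorm (zi G g z0 j - z0).
set S := fun j => sqnorm (\sum_(l < j) G l zs).
set a2 := fun j => sqnorm (G j zs).
set U := \sum_(j < n) P j.
set SV := \sum_(j < n) Vj j.
set Q := \sum_(j < n) S j.
set A2 := \sum_(j < n) a2 j.
have r20 : 0 <= r2 by apply: sqnorm_ge0.
have P0 : forall j, 0 <= P j by move=> j; apply: sqnorm_ge0.
have V0 : forall j, 0 <= Vj j by move=> j; apply: sqnorm_ge0.
have U0 : 0 <= U by apply: sumr_ge0.
have SV0 : 0 <= SV by apply: sumr_ge0.
have Q0 : 0 <= Q by apply: sumr_ge0 => j _; apply: sqnorm_ge0.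
have A20 : 0 <= A2 by apply: sumr_ge0 => j _; apply: sqnorm_ge0.
have L0 : 0 < L by apply: lt_le_trans muL.
have n1 : 1 <= n%:R :> R by rewrite ler1n.
set nn := n%:R in n1 Hstep *.
have nn0 : 0 <= nn by lra.
have E2 : forall j, (j <= n)%N ->
    Vj j <= 2 * g ^+ 2 * S j + 4 * g ^+ 2 * nn * L ^+ 2 * (U + nn * r2).
  move=> j jn.
  have -> : Vj j = g ^+ 2 * sqnorm (\sum_(l < j) G l zs
                 + \sum_(l < j) (G l (wi G g z0 l) - G l zs)).
    rewrite /Vj zi_sum sqnormN sqnormZ; congr (_ * sqnorm _).
    by rewrite -big_split /=; apply: eq_bigr => l _; rewrite addrC subrK.
  set D := \sum_(l < j) (G l (wi G g z0 l) - G l zs).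
  have HD : sqnorm D <= nn * L ^+ 2 * (2 * U + 2 * nn * r2).
    apply: (le_trans (sqnorm_sum _)).
    have : \sum_(l < j) sqnorm (G l (wi G g z0 l) - G l zs)
           <= \sum_(l < j) (L ^+ 2 * (2 * P l + 2 * r2)).
      apply: ler_sum => l _; apply: (le_trans (HL _ _ _)).
      rewrite ler_pM2l ?exprn_gt0 //.
      have -> : wi G g z0 l - zs = (wi G g z0 l - z0) + (z0 - zs) by rewrite addrA subrK.
      exact: sqnormD2.
    rewrite -mulr_sumr big_split /= -!mulr_sumr sum_const_ord => h.
    have hj : j%:R <= nn by rewrite ler_nat.
    have hP : \sum_(l < j) P l <= U by apply: sum_prefix_le.
    have hs : 0 <= \sum_(l < j) sqnorm (G l (wi G g z0 l) - G l zs).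
      by apply: sumr_ge0 => l _; apply: sqnorm_ge0.
    have hj0 : 0 <= j%:R :> R by [].
    have hP0 : 0 <= \sum_(l < j) P l by apply: sumr_ge0.
    set s1 := \sum_(l < j) sqnorm _ in h hs *.
    set s2 := \sum_(l < j) P l in h hP hP0 *.
    have L20 : 0 <= L ^+ 2 by rewrite sqr_ge0.
    have h3 : j%:R * s1 <= nn * s1 by rewrite ler_wpM2r.
    have h4 : nn * s1 <= nn * (L ^+ 2 * (2 * s2 + 2 * (j%:R * r2))) by rewrite ler_wpM2l.
    apply: (le_trans h3); apply: (le_trans h4).
    have h5 : 2 * s2 + 2 * (j%:R * r2) <= 2 * U + 2 * nn * r2.
      by have := ler_wpM2r r20 hj; lra.
    by rewrite mulrA ler_wpM2l // mulr_ge0.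
  have := sqnormD2 (\sum_(l < j) G l zs) D.
  rewrite -/(S j).
  have g20 : 0 <= g ^+ 2 by rewrite sqr_ge0.
  move=> h.
  have h5 : g ^+ 2 * sqnorm (\sum_(l < j) G l zs + D) <= g ^+ 2 * (2 * S j + 2 * sqnorm D).
    by rewrite ler_wpM2l.
  apply: (le_trans h5).
  have h6 : g ^+ 2 * (2 * S j + 2 * sqnorm D) <=
      g ^+ 2 * (2 * S j + 2 * (nn * L ^+ 2 * (2 * U + 2 * nn * r2))).
    by rewrite ler_wpM2l // lerD2l ler_wpM2l.
  apply: (le_trans h6); rewrite le_eqVlt; apply/orP; left; apply/eqP; ring.
have g20 : 0 <= g ^+ 2 by rewrite sqr_ge0.
have L20 : 0 <= L ^+ 2 by rewrite sqr_ge0.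
have E3 : forall j, P j <= (3 + 24 * (g ^+ 2 * L ^+ 2)) * Vj j + 12 * g ^+ 2 * a2 j
                          + 24 * (g ^+ 2 * L ^+ 2) * r2.
  move=> j; rewrite /P.
  have -> : wi G g z0 j - z0 = (zi G g z0 j - z0) + (- (2 * g)) *: G j zs
                  + (- (2 * g)) *: (G j (zi G g z0 j) - G j zs).
    rewrite -[in RHS]addrA -[in RHS]scalerDr [G j zs + _]addrC subrK scaleNr /wi.
    by rewrite addrAC.
  have h := sqnormD3 (zi G g z0 j - z0) ((- (2 * g)) *: G j zs)
                  ((- (2 * g)) *: (G j (zi G g z0 j) - G j zs)).
  rewrite !sqnormZ sqrrN exprMn in h.
  have h2 : sqnorm (G j (zi G g z0 j) - G j zs) <= L ^+ 2 * (2 * Vj j + 2 * r2).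
    apply: (le_trans (HL _ _ _)); apply: ler_wpM2l => //.
    have -> : zi G g z0 j - zs = (zi G g z0 j - z0) + (z0 - zs) by rewrite addrA subrK.
    exact: sqnormD2.
  have h3 : 2 ^+ 2 * g ^+ 2 * sqnorm (G j (zi G g z0 j) - G j zs)
            <= 2 ^+ 2 * g ^+ 2 * (L ^+ 2 * (2 * Vj j + 2 * r2)).
    apply: ler_wpM2l => //; apply: mulr_ge0 => //; exact: sqr_ge0.
  apply: (le_trans h); rewrite /Vj /a2 /= in h3 *.
  lra.
set a := g ^+ 2 * L ^+ 2.
set s := g ^+ 2 * nn ^+ 2 * L ^+ 2.
set x := g * nn * mu.
have hU : U <= (3 + 24 * a) * SV + 12 * (g ^+ 2 * A2) + 24 * a * (nn * r2).
  rewrite /U; apply: le_trans; first by apply: ler_sum => j _; exact: E3.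
  rewrite !big_split /= -!mulr_sumr sum_const_ord -/nn -/SV.
  apply: lerE; rewrite /A2 /a2 /a /=; ring.
have hSV : SV <= 2 * (g ^+ 2 * Q) + 4 * s * (U + nn * r2).
  rewrite /SV; apply: le_trans; first by apply: ler_sum => j _; exact: (E2 j (ltnW (ltn_ord j))).
  rewrite big_split /= -mulr_sumr sum_const_ord -/nn -/Q.
  apply: lerE; rewrite /s; ring.
have x0 : 0 < x by rewrite /x !mulr_gt0 //; lra.
have a0 : 0 <= a by rewrite /a mulr_ge0.
have as_ : a <= s.
  have h1 : 1 <= nn ^+ 2 by rewrite expr2; nra.
  have := ler_wpM2l a0 h1; rewrite mulr1 => h; apply: (le_trans h); apply: lerE.
  rewrite /a /s; ring.
have hsx : s <= x / 30.
  have e : mu * s = x * (g * nn * L ^+ 2) by rewrite /s /x; ring.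
  have : 30 * (mu * s) <= x * mu.
    rewrite e; have := ler_wpM2l (ltW x0) Hstep; lra.
  move=> h; rewrite -(ler_pM2l mu0); lra.
have hx2 : x ^+ 2 <= s.
  have e : s = (g * nn * L) ^+ 2 by rewrite /s; ring.
  have hx' : x <= g * nn * L.
    by rewrite /x; apply: ler_wpM2l => //; apply: mulr_ge0; lra.
  rewrite e; apply: lerXn2r; rewrite ?nnegrE //; first exact: ltW.
  by rewrite !mulr_ge0 //; lra.
have x1 : x <= 1/30.
  have : x * x <= x * (1/30) by rewrite -expr2; lra.
  by rewrite ler_pM2l.
have s0 : 0 <= s by apply: le_trans as_.
have hU2 : U <= 16 * (g ^+ 2 * Q) + 24 * (g ^+ 2 * A2) + 80 * s * (nn * r2).
  apply: (@arithU _ a s SV U (g ^+ 2 * Q) (g ^+ 2 * A2) (nn * r2)) => //; try lra.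
  - by rewrite mulr_ge0.
  - by rewrite mulr_ge0.
  - by rewrite mulr_ge0.
set e := \sum_(j < n) (G j (wi G g z0 j) - G j z0).
have hsumw : \sum_(j < n) G j (wi G g z0 j) = e + nn *: Fav z0.
  by rewrite -Hsum /e -big_split /=; apply: eq_bigr => j _; rewrite subrK.
have hz : zi G g z0 n = z0 - g *: (e + nn *: Fav z0).
  by rewrite -hsumw -zi_sum addrC subrK.
have Hz : zi G g z0 n - zs = (z0 - zs - (g * nn) *: Fav z0) + (- (g *: e)).
  rewrite hz scalerDr scalerA opprD.
  by rewrite addrAC [RHS]addrAC -!addrA [- (g *: e) + _]addrC.
set A := z0 - zs - (g * nn) *: Fav z0.
have hA : sqnorm A <= (1 - 2 * x + s) * r2.
  rewrite /A.
  have -> : Fav z0 = Fav z0 - Fav zs by rewrite Hzs subr0.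
  rewrite sqnormB sqnormZ dotvZr (dotvC (z0 - zs)).
  have m1 := Hmono z0 zs.
  have m2 := HFL z0 zs.
  have gn0 : 0 <= g * nn by apply: mulr_ge0; lra.
  have m1' := ler_wpM2l gn0 m1.
  have m2' := ler_wpM2l (sqr_ge0 (g * nn)) m2.
  rewrite -/r2 in m1' m2' *.
  rewrite /x /s; move: m1' m2'.
  set D := dotv _ _; set F2 := sqnorm _ => m1' m2'.
  have e1 : g * nn * (mu * r2) = g * nn * mu * r2 by ring.
  have e2 : (g * nn) ^+ 2 * (L ^+ 2 * r2) = g ^+ 2 * nn ^+ 2 * L ^+ 2 * r2 by ring.
  rewrite e1 in m1'; rewrite e2 in m2'.
  lra.
have he : sqnorm e <= nn * (L ^+ 2 * U).
  apply: (le_trans (sqnorm_sum _)); rewrite -/nn; apply: ler_wpM2l => //.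
  rewrite /U mulr_sumr; apply: ler_sum => j _.
  exact: HL.
have h1 := sqnormDe A (- (g *: e)) x0.
rewrite -Hz sqnormN sqnormZ in h1.
set c := g ^+ 2 * nn * L ^+ 2.
set W := 16 * (g ^+ 2 * Q) + 24 * (g ^+ 2 * A2).
have c0 : 0 <= c by rewrite /c; apply: mulr_ge0 => //; apply: mulr_ge0.
have W0 : 0 <= W.
  by rewrite /W; apply: addr_ge0; apply: mulr_ge0 => //; apply: mulr_ge0.
have hT : g ^+ 2 * sqnorm e <= c * W + 80 * s ^+ 2 * r2.
  have t1 := ler_wpM2l g20 he.
  have t2 := ler_wpM2l c0 hU2.
  have e1 : g ^+ 2 * (nn * (L ^+ 2 * U)) = c * U by rewrite /c; ring.
  have e2 : c * (16 * (g ^+ 2 * Q) + 24 * (g ^+ 2 * A2) + 80 * s * (nn * r2))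
            = c * W + 80 * s ^+ 2 * r2 by rewrite /c /W /s; ring.
  rewrite e1 in t1; rewrite e2 in t2; lra.
have hF := @arithF _ x s r2 c W _ _ _ x0 x1 s0 hsx r20 c0 W0 (sqnorm_ge0 A) h1 hA hT.
rewrite -(ler_pM2l x0) mulrDr.
have -> : x * (2 * g ^+ 4 * nn * L ^+ 2 * (16 * Q + 24 * A2) / x) = 2 * c * W.
  rewrite mulrC divfK; last by rewrite gt_eqF.
  by rewrite /c /W; ring.
exact: hF.
Qed.

End Epoch.

Section Perm.
Variables (R : realType) (d : nat).
Notation V := 'rV[R]_d.

Lemma sum_perm_shift (T : finType) (tau : {perm T}) (F : {perm T} -> R) :
  \sum_(p : {perm T}) F p = \sum_(p : {perm T}) F (tau * p)%g.
Proof. exact: (reindex_inj (mulgI tau)). Qed.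

Lemma sum_perm1 (T : finType) (f : T -> R) (i k : T) :
  \sum_(p : {perm T}) f (p i) = \sum_(p : {perm T}) f (p k).
Proof.
rewrite [LHS](sum_perm_shift (tperm i k)); apply: eq_bigr => p _.
by rewrite permM tpermL.
Qed.

Lemma sum_perm2 (T : finType) (h : T -> T -> R) (i i' k k' : T) :
  i != i' -> k != k' ->
  \sum_(p : {perm T}) h (p k) (p k') = \sum_(p : {perm T}) h (p i) (p i').
Proof.
move=> ii kk.
have l1k : k != tperm i k i'.
  apply/eqP => e; move: ii.
  have hh : tperm i k i = tperm i k i' by rewrite tpermL.
  by move=> /negP; apply; rewrite (perm_inj hh).
set l1 := tperm i k i'.
rewrite [RHS](sum_perm_shift (tperm i k * tperm l1 k')%g); apply: eq_bigr => p _.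
have t1 : l1 != k by rewrite eq_sym.
have t2 : k' != k by rewrite eq_sym.
rewrite !permM tpermL (tpermD t1 t2).
have -> : tperm i k i' = l1 by [].
by rewrite tpermL.
Qed.

Lemma sum_perm_reindex (T : finType) (p : {perm T}) (f : T -> R) :
  \sum_i f (p i) = \sum_i f i.
Proof. by rewrite [RHS](reindex_inj (@perm_inj _ p)). Qed.

Lemma sum_perm_reindexV (T : finType) (p : {perm T}) (f : T -> V) :
  \sum_i f (p i) = \sum_i f i.
Proof. by rewrite [RHS](reindex_inj (@perm_inj _ p)). Qed.

Lemma sum_perm_diag (n : nat) (f : 'I_n.+1 -> R) (i : 'I_n.+1) :
  \sum_(p : 'S_n.+1) f (p i) = #|{perm 'I_n.+1}|%:R * (n.+1%:R^-1 * \sum_k f k).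
Proof.
have h : n.+1%:R * \sum_(p : 'S_n.+1) f (p i) = #|{perm 'I_n.+1}|%:R * \sum_k f k.
  have -> : n.+1%:R * \sum_(p : 'S_n.+1) f (p i) = \sum_(k : 'I_n.+1) \sum_(p : 'S_n.+1) f (p k).
    transitivity (\sum_(k : 'I_n.+1) \sum_(p : 'S_n.+1) f (p i)).
      by rewrite sumr_const card_ord mulr_natl.
    by apply: eq_bigr => k _; apply: sum_perm1.
  rewrite exchange_big /=.
  under eq_bigr do rewrite sum_perm_reindex.
  by rewrite sumr_const mulr_natl.
rewrite mulrA [_ * n.+1%:R^-1]mulrC -mulrA -h mulrA mulVf ?mul1r //.
by rewrite pnatr_eq0.
Qed.


Lemma dotv_sumr (I : Type) (s : seq I) (P : pred I) (f : I -> V) (w : V) :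
  dotv w (\sum_(i <- s | P i) f i) = \sum_(i <- s | P i) dotv w (f i).
Proof. by rewrite dotvC dotv_suml; apply: eq_bigr => i _; rewrite dotvC. Qed.

Lemma sqnorm_sum_dot (m : nat) (b : 'I_m -> V) :
  sqnorm (\sum_(l < m) b l) = \sum_(l < m) \sum_(k < m) dotv (b l) (b k).
Proof.
rewrite /sqnorm dotv_suml; apply: eq_bigr => l _; exact: dotv_sumr.
Qed.

Lemma sum_perm_offdiag (n : nat) (a : 'I_n.+1 -> V) : \sum_i a i = 0 ->
  forall i i', i != i' -> \sum_(p : 'S_n.+1) dotv (a (p i)) (a (p i')) <= 0.
Proof.
move=> a0 i i' ii.
set T := \sum_(p : 'S_n.+1) dotv (a (p i)) (a (p i')).
have key : \sum_(k : 'I_n.+1) \sum_(k' | k' != k) \sum_(p : 'S_n.+1) dotv (a (p k)) (a (p k'))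
           = (n.+1 * n)%:R * T.
  transitivity (\sum_(k : 'I_n.+1) \sum_(k' | k' != k) T).
    apply: eq_bigr => k _; apply: eq_bigr => k' kk.
    have kk' : k != k' by rewrite eq_sym.
    exact: (sum_perm2 (fun x y => dotv (a x) (a y)) ii kk').
  under eq_bigr do rewrite sumr_const cardC1 card_ord.
  by rewrite sumr_const card_ord -mulrnA mulr_natl mulnC.
have key2 : \sum_(k : 'I_n.+1) \sum_(k' | k' != k) \sum_(p : 'S_n.+1) dotv (a (p k)) (a (p k'))
            <= 0.
  under eq_bigr do rewrite exchange_big /=.
  rewrite exchange_big /=.
  apply: sumr_le0 => p _.
  have -> : \sum_(k : 'I_n.+1) \sum_(k' | k' != k) dotv (a (p k)) (a (p k'))
            = \sum_(k : 'I_n.+1) (dotv (a (p k)) (\sum_k' a (p k')) - sqnorm (a (p k))).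
    apply: eq_bigr => k _.
    by rewrite dotv_sumr [in RHS](bigD1 k) //= /sqnorm addrAC subrr add0r.
  rewrite sum_perm_reindexV a0.
  apply: sumr_le0 => k _.
  rewrite dotvC dotv0l sub0r oppr_le0; exact: sqnorm_ge0.
have n0 : (0 < n)%N.
  case: n a a0 i i' ii {T key key2} => [|//] a a0 i i'.
  by rewrite (ord1 i) (ord1 i') eqxx.
rewrite key in key2.
by move: key2; rewrite pmulr_rle0 // ltr0n muln_gt0 n0.
Qed.

Lemma perm_partial (n : nat) (a : 'I_n.+1 -> V) : \sum_i a i = 0 ->
  forall j, (j <= n.+1)%N ->
  \sum_(p : 'S_n.+1) sqnorm (\sum_(l < j) a (p (inord l)))
   <= #|{perm 'I_n.+1}|%:R * (j%:R * (n.+1%:R^-1 * \sum_i sqnorm (a i))).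
Proof.
move=> a0 j jn.
under eq_bigr do rewrite sqnorm_sum_dot.
rewrite exchange_big /=.
under eq_bigr do rewrite exchange_big /=.
apply: (@le_trans _ _ (\sum_(l < j) (#|{perm 'I_n.+1}|%:R * (n.+1%:R^-1 * \sum_i sqnorm (a i))))); last first.
  rewrite sumr_const card_ord -mulr_natl le_eqVlt; apply/orP; left; apply/eqP; ring.
apply: ler_sum => l _.
rewrite (bigD1 l) //=.
rewrite -(sum_perm_diag (fun k => sqnorm (a k)) (inord l)).
 rewrite  -[X in _ <= X]addr0 lerD2l.
apply: sumr_le0 => m ml.
apply: sum_perm_offdiag => //.
have hm : (m < n.+1)%N := leq_trans (ltn_ord m) jn.
have hl : (l < n.+1)%N := leq_trans (ltn_ord l) jn.
apply/eqP => /(congr1 val); rewrite /= !inordK // => e.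
by move: ml; rewrite (val_inj e) eqxx.
Qed.

End Perm.

Section Setting.
Variables (R : realType) (d : nat).
Notation V := 'rV[R]_d.

Lemma Lmax_ge0 n (L : 'I_n -> R) : 0 <= Lmax L.
Proof. exact: bigmax_ge_id. Qed.

Lemma Lmax_ge n (L : 'I_n -> R) i : L i <= Lmax L.
Proof. exact: le_bigmax. Qed.

Lemma lip_sq n (F : 'I_n -> V -> V) (L : 'I_n -> R) i (x y : V) :
  lipschitz (F i) (L i) -> sqnorm (F i x - F i y) <= Lmax L ^+ 2 * sqnorm (x - y).
Proof.
move=> /(_ x y) h.
have e0 : 0 <= enorm (x - y) by apply: sqrtr_ge0.
have h2 : enorm (F i x - F i y) <= Lmax L * enorm (x - y).
  apply: (le_trans h); apply: ler_wpM2r => //; exact: Lmax_ge.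
have := lerXn2r 2 (_ : enorm (F i x - F i y) \is Num.nneg) (_ : Lmax L * enorm (x - y) \is Num.nneg) h2.
rewrite /enorm exprMn !sqr_sqrtr ?sqnorm_ge0 //; apply.
- by rewrite nnegrE sqrtr_ge0.
- by rewrite nnegrE mulr_ge0 // Lmax_ge0.
Qed.

Lemma Favg_lip n (F : 'I_n -> V -> V) (L : 'I_n -> R) (x y : V) : (0 < n)%N ->
  (forall i, lipschitz (F i) (L i)) ->
  sqnorm (Favg F x - Favg F y) <= Lmax L ^+ 2 * sqnorm (x - y).
Proof.
move=> n0 HL.
rewrite /Favg -scalerBr -sumrB sqnormZ.
have h := sqnorm_sum (fun i => F i x - F i y).
have h2 : \sum_(i < n) sqnorm (F i x - F i y) <= n%:R * (Lmax L ^+ 2 * sqnorm (x - y)).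
  rewrite -sum_const_ord; apply: ler_sum => i _; exact: lip_sq.
have nn : 0 < n%:R :> R by rewrite ltr0n.
have hi : 0 <= n%:R^-1 ^+ 2 :> R by rewrite sqr_ge0.
apply: (le_trans (ler_wpM2l hi h)).
apply: (le_trans (ler_wpM2l hi (ler_wpM2l (ltW nn) h2))).
rewrite le_eqVlt; apply/orP; left; apply/eqP; field.
by rewrite gt_eqF.
Qed.

Lemma sum_G n' (F : 'I_n'.+1 -> V -> V) (p : 'S_n'.+1) (z : V) :
  \sum_(j < n'.+1) F (p (inord j)) z = n'.+1%:R *: Favg F z.
Proof.
rewrite /Favg scalerA mulfV ?pnatr_eq0 // scale1r.
under eq_bigr do rewrite inord_val.
exact: (sum_perm_reindexV p (fun i => F i z)).
Qed.

Lemma foldl_ext (T U : Type) (f1 f2 : U -> T -> U) s z :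
  (forall z x, f1 z x = f2 z x) -> foldl f1 z s = foldl f2 z s.
Proof. by move=> h; elim: s z => [|a s IH] z //=; rewrite h IH. Qed.

Lemma foldl_map' (T T' U : Type) (f : U -> T' -> U) (h : T -> T') s z :
  foldl f z (map h s) = foldl (fun z x => f z (h x)) z s.
Proof. by elim: s z => [|a s IH] z //=. Qed.

Lemma foldl_iota (G : nat -> V -> V) (g : R) (z : V) m :
  foldl (fun z j => stepG (G j) g z) z (iota 0 m) = zi G g z m.
Proof.
elim: m => [|m IH] //.
have -> : iota 0 m.+1 = iota 0 m ++ [:: m] by rewrite -addn1 iotaD.
by rewrite foldl_cat IH.
Qed.

Lemma epoch_eq n' (F : 'I_n'.+1 -> V -> V) (g : R) (p : 'S_n'.+1) (z : V) :
  seg_epoch F g (2 * g) p z = zi (fun j => F (p (inord j))) g z n'.+1.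
Proof.
rewrite /seg_epoch.
rewrite (@foldl_ext _ _ _ (fun z (i : 'I_n'.+1) => stepG (F (p (inord (val i)))) g z)); last first.
  by move=> z' x; rewrite inord_val.
rewrite -(foldl_map' (fun z j => stepG (F (p (inord j))) g z) val) val_enum_ord.
exact: foldl_iota.
Qed.


Lemma rec_bound (rho N B : R) (Rk : nat -> R) : 0 <= rho -> 0 <= B ->
  (forall k, Rk k.+1 <= rho * Rk k + N) -> rho * B + N <= B ->
  forall k, Rk k <= rho ^+ k * Rk 0 + B.
Proof.
move=> r0 B0 h hB; elim => [|k IH]; first by rewrite expr0 mul1r lerDl.
apply: (le_trans (h k)).
have := ler_wpM2l r0 IH; rewrite exprSr; lra.
Qed.

Lemma sum_A2 n' (F : 'I_n'.+1 -> V -> V) (p : 'S_n'.+1) (z : V) :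
  \sum_(j < n'.+1) sqnorm (F (p (inord j)) z) = \sum_i sqnorm (F i z).
Proof.
under eq_bigr do rewrite inord_val.
exact: (sum_perm_reindex p (fun i => sqnorm (F i z))).
Qed.

Lemma core n' (F : 'I_n'.+1 -> V -> V) (L : 'I_n'.+1 -> R) (mu : R) (z0 zs : V) (g : R) k :
  seg_setting F L mu zs -> 0 < g -> mu <= Lmax L ->
  30 * g * n'.+1%:R * Lmax L ^+ 2 <= mu ->
  Eperm (fun pi => sqnorm (segso_iter F g (2 * g) pi z0 k - zs))
  <= (1 - g * n'.+1%:R * mu / 2) ^+ k * sqnorm (z0 - zs)
     + (64 * n'.+1%:R + 96) * g ^+ 2 * Lmax L ^+ 2 * sigma2 F zs / mu ^+ 2.
Proof.
case=> _ mu0 Hmono HL Hzs g0 muL Hstep.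
set Lm := Lmax L.
set nn := n'.+1%:R.
set x := g * nn * mu.
set A2 := \sum_i sqnorm (F i zs).
set Q := fun p : 'S_n'.+1 =>
  \sum_(j < n'.+1) sqnorm (\sum_(l < j) F (p (inord l)) zs).
set N := fun p => 2 * g ^+ 4 * nn * Lm ^+ 2 * (16 * Q p + 24 * A2) / x.
set rho := 1 - x / 2.
have nn1 : 1 <= nn by rewrite /nn ler1n.
have Lm0 : 0 < Lm by apply: lt_le_trans muL.
have x0 : 0 < x by rewrite /x !mulr_gt0 //; lra.
have x1 : x <= 1/30.
  have h1 : x <= g * nn * Lm by rewrite /x ler_wpM2l // mulr_ge0 //; lra.
  have h2 : 30 * (g * nn * Lm) * Lm <= 1 * Lm.
    have : 30 * g * nn * Lm ^+ 2 <= Lm by apply: le_trans Hstep muL.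
    by rewrite expr2 mul1r; lra.
  rewrite ler_pM2r // in h2; lra.
have rho0 : 0 <= rho by rewrite /rho; lra.
have Q0 : forall p, 0 <= Q p by move=> p; apply: sumr_ge0 => j _; apply: sqnorm_ge0.
have A20 : 0 <= A2 by apply: sumr_ge0 => i _; apply: sqnorm_ge0.
have N0 : forall p, 0 <= N p.
  move=> p; rewrite /N; apply: divr_ge0; last exact: ltW.
  apply: mulr_ge0; last by have := Q0 p; lra.
  by rewrite !mulr_ge0 //; lra.
have hstep : forall (p : 'S_n'.+1) z,
    sqnorm (seg_epoch F g (2 * g) p z - zs) <= rho * sqnorm (z - zs) + N p.
  move=> p z; rewrite epoch_eq.
  have := @epoch_bound R d (fun j => F (p (inord j))) g mu Lm (Favg F) z zs n'.+1
    (ltn0Sn n') g0 mu0 muL Hstep (fun j x y => lip_sq x y (HL _))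
    (sum_G F p) Hmono (fun a b => Favg_lip a b (ltn0Sn n') HL) Hzs.
  by rewrite sum_A2.
have hp : forall p, sqnorm (segso_iter F g (2 * g) p z0 k - zs)
                    <= rho ^+ k * sqnorm (z0 - zs) + 2 * N p / x.
  move=> p.
  apply: (rec_bound (Rk := fun k => sqnorm (segso_iter F g (2 * g) p z0 k - zs))) => //.
  - by apply: divr_ge0; [apply: mulr_ge0 | apply: ltW].
  - by move=> k'; rewrite /segso_iter iterS; apply: hstep.
  - rewrite le_eqVlt; apply/orP; left; apply/eqP; rewrite /rho; field.
    by rewrite gt_eqF.
have Hsum0 : \sum_i F i zs = 0.
  have := sum_G F 1%g zs; rewrite Hzs scaler0.
  by under eq_bigr do rewrite perm1 inord_val.
pose P : R := #|{perm 'I_n'.+1}|%:R.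
have P0 : 0 < P.
  by rewrite /P ltr0n; apply/card_gt0P; exists 1%g.
set c1 := 64 * g ^+ 4 * nn * Lm ^+ 2 / x ^+ 2.
set c2 := 96 * g ^+ 4 * nn * Lm ^+ 2 * A2 / x ^+ 2.
have c10 : 0 <= c1.
  rewrite /c1; apply: divr_ge0; last by rewrite sqr_ge0.
  by rewrite !mulr_ge0 //; lra.
have hn' : 0 < 1 + n'%:R :> R by have := ler0n R n'; lra.
have hB : forall p, 2 * N p / x = c1 * Q p + c2.
  move=> p; rewrite /N /c1 /c2 /x /Lm /nn /A2; move: (Q p) => q; field.
  by apply/and3P; split; rewrite gt_eqF.
have hQ : \sum_(p : 'S_n'.+1) Q p <= nn * (P * A2).
  rewrite /Q exchange_big /=.
  apply: (@le_trans _ _ (\sum_(j < n'.+1) (P * A2))); last first.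
    by rewrite sum_const_ord.
  apply: ler_sum => j _.
  apply: (le_trans (perm_partial Hsum0 (ltnW (ltn_ord j)))).
  apply: ler_wpM2l; first exact: (ltW P0).
  have hj : j%:R <= nn by rewrite /nn ler_nat ltnW.
  have nn0 : 0 < nn by lra.
  rewrite mulrA -[X in _ <= X]mul1r ler_wpM2r //.
  by rewrite ler_pdivrMr // mul1r.
rewrite /Eperm ler_pdivrMr // -/P.
apply: (le_trans (ler_sum _ (fun p _ => hp p))).
rewrite big_split /= sumr_const.
under eq_bigr do rewrite hB.
rewrite big_split /= -mulr_sumr sumr_const.
rewrite -[c2 *+ _]mulr_natl -[(rho ^+ k * _) *+ _]mulr_natl.
rewrite -[(#|_|%:R)]/P.
have e1 : c1 * \sum_p Q p <= c1 * (nn * (P * A2)) by apply: ler_wpM2l.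
have e2 : c1 * (nn * (P * A2)) + P * c2
   = P * ((64 * nn + 96) * g ^+ 2 * Lm ^+ 2 * sigma2 F zs / mu ^+ 2).
  rewrite /sigma2 /c1 /c2 /x /nn /Lm /A2 /P.
  move: (#|_|%:R) => P'.
  field.
  by apply/and3P; split; rewrite gt_eqF.
move: e1 e2; set T := (_ * _ * _ * sigma2 F zs / _).
move: (c1 * _) (c1 * _) => y1 y2 e1 e2.
lra.
Qed.

End Setting.

Section Main.
Variables (R : realType) (d : nat).
Notation V := 'rV[R]_d.

Lemma mu_le_L n (F : 'I_n -> V -> V) (L : 'I_n -> R) mu zs :
  seg_setting F L mu zs -> (0 < d)%N -> 0 < Lmax L -> mu <= Lmax L.
Proof.
case=> n0 mu0 Hmono HL _ d0 Lm0.
set b : V := const_mx 1.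
have sb : 0 < sqnorm b.
  rewrite /sqnorm /dotv.
  under eq_bigr do rewrite mxE mul1r.
  by rewrite sumr_const card_ord ltr0n.
have h1 := Hmono b 0.
have h2 := Favg_lip b 0 n0 HL.
have h3 := young1 (Favg F b - Favg F 0) (Lmax L *: (b - 0)).
rewrite sqnormZ dotvZr in h3.
rewrite subr0 in h1 h2 h3.
set D := dotv _ _ in h1 h3.
have h4 : Lmax L * D <= Lmax L * (Lmax L * sqnorm b) by lra.
rewrite ler_pM2l // in h4.
have : mu * sqnorm b <= Lmax L * sqnorm b by lra.
by rewrite ler_pM2r.
Qed.

Lemma iter_g0 n (F : 'I_n -> V -> V) (p : 'S_n) (z0 : V) k :
  segso_iter F 0 (2 * 0) p z0 k = z0.
Proof.
rewrite /segso_iter; elim: k => [|k IH] //=; rewrite IH /seg_epoch.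
rewrite (@foldl_ext _ _ _ (fun z _ => z)); last first.
  by move=> z x; rewrite /seg_step !scale0r subr0.
by elim: (enum 'I_n).
Qed.

Lemma Eperm_const n (c : R) : Eperm (fun _ : 'S_n => c) = c.
Proof.
have hP : \sum_(p : 'S_n) c = c * #|{perm 'I_n}|%:R by rewrite sumr_const mulr_natr.
rewrite /Eperm hP mulfK //.
by rewrite pnatr_eq0 -lt0n; apply/card_gt0P; exists 1%g.
Qed.

Lemma Eperm_ext n (X Y : 'S_n -> R) : (forall p, X p = Y p) -> Eperm X = Eperm Y.
Proof. by move=> h; rewrite /Eperm (eq_bigr _ (fun p _ => h p)). Qed.

Lemma core' n (F : 'I_n -> V -> V) (L : 'I_n -> R) (mu : R) (z0 zs : V) (g : R) k :
  seg_setting F L mu zs -> 0 <= g ->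
  g <= mu / (10 * Lmax L ^+ 2 * Num.sqrt (10 * n%:R ^+ 2 + 2 * n%:R + 54)) ->
  Eperm (fun pi => sqnorm (segso_iter F g (2 * g) pi z0 k - zs))
   <= (1 - g * n%:R * mu / 2) ^+ k * sqnorm (z0 - zs)
      + (64 * n%:R + 96) * g ^+ 2 * Lmax L ^+ 2 * sigma2 F zs / mu ^+ 2
  /\ (sqnorm (z0 - zs) = 0 \/ 0 <= 1 - g * n%:R * mu / 2).
Proof.
move=> set g0 gA.
have [n0 mu0 _ _ _] := set.
have [g00|gpos] : g = 0 \/ 0 < g.
  by move: g0; rewrite le_eqVlt => /orP [/eqP ->|->]; [left|right].
  subst g; split; last by right; rewrite !mul0r subr0 ler01.
  rewrite (Eperm_ext (fun p => congr1 (fun z => sqnorm (z - zs)) (iter_g0 F p z0 k))).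
  rewrite Eperm_const !mul0r subr0 expr1n mul1r expr0n /= mulr0 !mul0r addr0.
  exact: lexx.
have [d00|dpos] : d = 0%N \/ (0 < d)%N by case: (d) => [|?]; [left|right].
  have sq0 : forall v : V, sqnorm v = 0.
    move=> v; rewrite /sqnorm /dotv big1 // => j _.
    by have := ltn_ord j; rewrite {2}d00.
  rewrite (Eperm_ext (fun p => sq0 _)).
  rewrite Eperm_const sq0 /sigma2.
  rewrite big1 ?mulr0 ?mul0r ?addr0; last by move=> i _; rewrite sq0.
  split; [exact: lexx | by left].
have Lm0 : 0 < Lmax L.
  rewrite lt_neqAle Lmax_ge0 andbT; apply/eqP => e; move: gA.
  rewrite -e expr2 ?mul0r ?mulr0 ?mul0r ?mulr0 invr0 mulr0 => ?; lra.
set S := Num.sqrt _ in gA.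
have nn0 : 0 <= n%:R :> R by [].
have hS : 3 * n%:R <= S.
  rewrite -[3 * n%:R]ger0_norm; last by lra.
  rewrite -sqrtr_sqr /S ler_wsqrtr //; nra.
have S0 : 0 < S.
  have : (0 < n%:R :> R) by rewrite ltr0n.
  lra.
have hstep : 30 * g * n%:R * Lmax L ^+ 2 <= mu.
  have D0 : 0 < 10 * Lmax L ^+ 2 * S by rewrite !mulr_gt0 // exprn_gt0.
  rewrite ler_pdivlMr // in gA.
  have H : 0 <= 10 * g * Lmax L ^+ 2 by rewrite !mulr_ge0 //; lra.
  have h2 := ler_wpM2l H hS.
  have e1 : 30 * g * n%:R * Lmax L ^+ 2 = 10 * g * Lmax L ^+ 2 * (3 * n%:R) by ring.
  have e2 : g * (10 * Lmax L ^+ 2 * S) = 10 * g * Lmax L ^+ 2 * S by ring.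
  rewrite e2 in gA; rewrite e1; exact: le_trans h2 gA.
have muL := mu_le_L set dpos Lm0.
have x1 : g * n%:R * mu <= 1/30.
  have h1 : g * n%:R * mu <= g * n%:R * Lmax L by rewrite ler_wpM2l // mulr_ge0 //; lra.
  have h2 : 30 * (g * n%:R * Lmax L) * Lmax L <= 1 * Lmax L.
    have : 30 * g * n%:R * Lmax L ^+ 2 <= Lmax L by apply: le_trans hstep muL.
    by rewrite expr2 mul1r; lra.
  rewrite ler_pM2r // in h2; lra.
split; last by right; lra.
clear -set gpos muL hstep n0.
case: n F L set n0 hstep muL => [//|n'] F L set n0 hstep muL.
exact: core.
Qed.

End Main.

Lemma part1 (R : realType) :
  (forall (n d : nat) (F : 'I_n -> 'rV[R]_d -> 'rV[R]_d) (L : 'I_n -> R)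
          (mu : R) (z0 zs : 'rV[R]_d) (g1 g2 : R),
     seg_setting F L mu zs ->
     0 < g1 -> g2 = 2 * g1 ->
     g1 <= mu / (10 * Lmax L ^+ 2 * Num.sqrt (10 * n%:R ^+ 2 + 2 * n%:R + 54)) ->
     forall k : nat,
       Eperm (fun pi => sqnorm (segso_iter F g1 g2 pi z0 k - zs))
       <= (1 - g1 * n%:R * mu / 4) ^+ k * sqnorm (z0 - zs)
          + 96 * Lmax L ^+ 2 / mu ^+ 2
            * ((25 + n%:R) * g1 ^+ 2 + g2 ^+ 2) * sigma2 F zs).
Proof.
move=> n d F L mu z0 zs g g2 set g0 -> gA k.
have [n0 mu0 _ _ _] := set.
have [h1 h2] := core' z0 k set (ltW g0) gA.
apply: (le_trans h1).
have r0 := sqnorm_ge0 (z0 - zs).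
have nn0 : 0 <= n%:R :> R by [].
have x0 : 0 <= g * n%:R * mu by rewrite !mulr_ge0 //; lra.
apply: lerD.
  case: h2 => [->|h2]; first by rewrite !mulr0.
  apply: ler_wpM2r => //; apply: lerXn2r; rewrite ?nnegrE //; lra.
have s0 : 0 <= sigma2 F zs.
  by rewrite /sigma2 mulr_ge0 // ?invr_ge0 // sumr_ge0 // => i _; apply: sqnorm_ge0.
set M := g ^+ 2 * Lmax L ^+ 2 * sigma2 F zs / mu ^+ 2.
have M0 : 0 <= M.
  rewrite /M; apply: divr_ge0; last by rewrite sqr_ge0.
  apply: mulr_ge0 => //; apply: mulr_ge0; exact: sqr_ge0.
have -> : (64 * n%:R + 96) * g ^+ 2 * Lmax L ^+ 2 * sigma2 F zs / mu ^+ 2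
          = (64 * n%:R + 96) * M by rewrite /M; ring.
have -> : 96 * Lmax L ^+ 2 / mu ^+ 2 * ((25 + n%:R) * g ^+ 2 + (2 * g) ^+ 2) * sigma2 F zs
          = (96 * (29 + n%:R)) * M by rewrite /M; ring.
apply: ler_wpM2r => //; lra.
Qed.

Lemma part2 (R : realType) :
  (exists (c : R) (p : nat) (C : R -> R -> R -> R -> R),
     0 < c /\
     forall (n d : nat) (F : 'I_n -> 'rV[R]_d -> 'rV[R]_d) (L : 'I_n -> R)
            (mu : R) (z0 zs : 'rV[R]_d) (K : nat),
       seg_setting F L mu zs -> (0 < K)%N ->
       let g1 := Num.min
                   (mu / (10 * Lmax L ^+ 2
                          * Num.sqrt (10 * n%:R ^+ 2 + 2 * n%:R + 54)))
                   (4 * ln (Num.sqrt n%:R * K%:R) / (mu * n%:R * K%:R)) in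
       let g2 := 2 * g1 in
       Eperm (fun pi => sqnorm (segso_iter F g1 g2 pi z0 K - zs))
       <= C mu (Lmax L) (sqnorm (z0 - zs)) (sigma2 F zs)
          * (1 + ln (Num.sqrt n%:R * K%:R)) ^+ p
          * (expR (- (c * mu ^+ 2 * K%:R / Lmax L ^+ 2))
             + (n%:R * K%:R ^+ 2)^-1)).
Proof.
exists (1/180), 2%N, (fun mu L r s => r + 2560 * L ^+ 2 * s / mu ^+ 4).
split; first lra.
move=> n d F L mu z0 zs K set K0; cbv zeta.
have [n0 mu0 _ _ _] := set.
set Lm := Lmax L.
set S := Num.sqrt _.
set y := Num.sqrt n%:R * K%:R.
set l := ln y.
set A := mu / (10 * Lm ^+ 2 * S).
set B := 4 * l / (mu * n%:R * K%:R).
set g := Num.min A B.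
set r0 := sqnorm (z0 - zs).
set sg := sigma2 F zs.
set E := expR _.
set I := (n%:R * K%:R ^+ 2)^-1.
have nn1 : 1 <= n%:R :> R by rewrite ler1n.
have K1 : 1 <= K%:R :> R by rewrite ler1n.
have sn1 : 1 <= Num.sqrt n%:R :> R.
  by have := ler_wsqrtr nn1; rewrite sqrtr1.
have y1 : 1 <= y by rewrite /y; nra.
have l0 : 0 <= l by apply: ln_ge0.
have Lm0 : 0 <= Lm by apply: Lmax_ge0.
have S0 : 0 <= S by apply: sqrtr_ge0.
have A0 : 0 <= A by apply: divr_ge0; [lra | rewrite !mulr_ge0 // sqr_ge0].
have B0 : 0 <= B by apply: divr_ge0; [lra | rewrite !mulr_ge0 //; lra].
have gmin : g = Num.min A B by [].
have g0 : 0 <= g by rewrite gmin le_min A0 B0.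
have gA : g <= A by rewrite gmin ge_min lexx.
have gB : g <= B by rewrite gmin ge_min lexx orbT.
have [h1 h2] := core' z0 K set g0 gA.
rewrite -/r0 in h1 h2; rewrite -/sg -/Lm in h1.
apply: (le_trans h1).
have r00 : 0 <= r0 by apply: sqnorm_ge0.
have sg0 : 0 <= sg.
  by rewrite /sg /sigma2 mulr_ge0 // ?invr_ge0 // sumr_ge0 // => i _; apply: sqnorm_ge0.
have E0 : 0 <= E by apply: ltW; apply: expR_gt0.
have I0 : 0 <= I by rewrite /I invr_ge0 mulr_ge0 // sqr_ge0.
set x := g * n%:R * mu.
have hc : (1 - x / 2) ^+ K * r0 <= (E + I) * r0.
  case: h2 => [->|h2]; first by rewrite !mulr0.
  apply: ler_wpM2r => //.
  have e1 : (1 - x / 2) ^+ K <= expR (- (x / 2)) ^+ K.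
    apply: lerXn2r; rewrite ?nnegrE //; first by apply: ltW; apply: expR_gt0.
    by have := expR_ge1Dx (- (x / 2)); lra.
  apply: (le_trans e1); rewrite -expRM_natl.
  have K0' : 0 < K%:R :> R by rewrite ltr0n.
  have n0' : 0 < n%:R :> R by rewrite ltr0n.
  case/orP: (le_total A B) => hAB.
  - have gE : g = A by rewrite /g (min_l hAB).
    apply: le_trans (_ : E <= E + I); last by rewrite lerDl.
    rewrite /E ler_expR.
    have x0 : 0 <= x by rewrite /x !mulr_ge0 //; lra.
    have [Lz|Lpos] : Lm = 0 \/ 0 < Lm.
      by move: Lm0; rewrite le_eqVlt => /orP [/eqP <-|->]; [left|right].
      have z2 : (0 : R) ^+ 2 = 0 by rewrite expr2 mulr0.
      rewrite Lz z2 invr0 mulr0 oppr0.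
      have : 0 <= K%:R * (x / 2) by rewrite mulr_ge0 //; lra.
      lra.
    have Spos : 0 < S.
      rewrite /S sqrtr_gt0.
      have : 0 <= n%:R ^+ 2 :> R by rewrite sqr_ge0.
      lra.
    have S9 : S <= 9 * n%:R.
      rewrite -[9 * n%:R]ger0_norm; last by lra.
      have hnn : n%:R <= n%:R ^+ 2 :> R.
        have hn1 : 0 <= n%:R - 1 :> R by lra.
        rewrite expr2; have := mulr_ge0 hn1 (ltW n0'); lra.
      rewrite -sqrtr_sqr /S ler_wsqrtr //; lra.
    have eq1 : 1 / 180 * mu ^+ 2 * K%:R / Lm ^+ 2 = 1 / 18 * (mu * K%:R * A) * S.
      rewrite /A; field.
      by apply/andP; split; rewrite gt_eqF.
    have eq2 : K%:R * - (x / 2) = - (1 / 2 * (mu * K%:R * A) * n%:R).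
      by rewrite /x gE; ring.
    rewrite eq1 eq2.
    have mKA : 0 <= mu * K%:R * A.
      by apply: mulr_ge0 => //; apply: mulr_ge0; lra.
    have := ler_wpM2l mKA S9.
    lra.
  - have gE : g = B by rewrite /g (min_r hAB).
    apply: le_trans (_ : I <= E + I); last by rewrite lerDr.
    have eq2 : K%:R * - (x / 2) = - (2%:R * l).
      rewrite /x gE /B; field.
      by apply/and3P; split; rewrite gt_eqF.
    rewrite eq2 expRN expRM_natl lnK; last by rewrite posrE; lra.
    rewrite /y exprMn sqr_sqrtr //; exact: lexx.
have hn : (64 * n%:R + 96) * g ^+ 2 * Lm ^+ 2 * sg / mu ^+ 2
          <= 2560 * Lm ^+ 2 * sg / mu ^+ 4 * l ^+ 2 * I.
  have K0' : 0 < K%:R :> R by rewrite ltr0n.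
  have n0' : 0 < n%:R :> R by rewrite ltr0n.
  set M := Lm ^+ 2 * sg / mu ^+ 2.
  have M0 : 0 <= M.
    rewrite /M; apply: divr_ge0; last by rewrite sqr_ge0.
    by apply: mulr_ge0 => //; rewrite sqr_ge0.
  have gB2 : g ^+ 2 <= B ^+ 2 by apply: lerXn2r; rewrite ?nnegrE.
  have c1 : (64 * n%:R + 96) * g ^+ 2 <= 160 * n%:R * B ^+ 2.
    apply: ler_pM => //; first by lra.
    - by rewrite sqr_ge0.
    - lra.
  have e1 : (64 * n%:R + 96) * g ^+ 2 * Lm ^+ 2 * sg / mu ^+ 2
            = (64 * n%:R + 96) * g ^+ 2 * M by rewrite /M; ring.
  have e2 : 2560 * Lm ^+ 2 * sg / mu ^+ 4 * l ^+ 2 * I = 160 * n%:R * B ^+ 2 * M.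
    rewrite /M /B /I; field.
    by apply/and3P; split; rewrite gt_eqF.
  by rewrite e1 e2; apply: ler_wpM2r.
set Z := 2560 * Lm ^+ 2 * sg / mu ^+ 4 in hn *.
have Z0 : 0 <= Z.
  rewrite /Z; apply: divr_ge0; last by rewrite exprn_ge0 //; lra.
  by rewrite mulr_ge0 // mulr_ge0 // sqr_ge0.
set Q := (1 + l) ^+ 2.
have Q1 : 1 <= Q by rewrite /Q; nra.
have lQ : l ^+ 2 <= Q by rewrite /Q; nra.
have f1 : (E + I) * r0 <= Q * ((E + I) * r0).
  by rewrite ler_peMl // mulr_ge0 // addr_ge0.
have f2' : l ^+ 2 * I <= Q * (E + I).
  apply: ler_pM; [exact: sqr_ge0 | exact: I0 | exact: lQ | by rewrite lerDr].
have f2 := ler_wpM2l Z0 f2'.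
lra.
Qed.

Unset Implicit Arguments.
Set Strict Implicit.

Theorem corollary1 (R : realType) :
  (* Part 1 *)
  (forall (n d : nat) (F : 'I_n -> 'rV[R]_d -> 'rV[R]_d) (L : 'I_n -> R)
          (mu : R) (z0 zs : 'rV[R]_d) (g1 g2 : R),
     seg_setting F L mu zs ->
     0 < g1 -> g2 = 2 * g1 ->
     g1 <= mu / (10 * Lmax L ^+ 2 * Num.sqrt (10 * n%:R ^+ 2 + 2 * n%:R + 54)) ->
     forall k : nat,
       Eperm (fun pi => sqnorm (segso_iter F g1 g2 pi z0 k - zs))
       <= (1 - g1 * n%:R * mu / 4) ^+ k * sqnorm (z0 - zs)
          + 96 * Lmax L ^+ 2 / mu ^+ 2
            * ((25 + n%:R) * g1 ^+ 2 + g2 ^+ 2) * sigma2 F zs)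
  /\
  (* Part 2: O~ read as: absolute c > 0 and log power p, constant depending
     only on (mu, L_max, ||z0 - z*||^2, sigma_*^2) *)
  (exists (c : R) (p : nat) (C : R -> R -> R -> R -> R),
     0 < c /\
     forall (n d : nat) (F : 'I_n -> 'rV[R]_d -> 'rV[R]_d) (L : 'I_n -> R)
            (mu : R) (z0 zs : 'rV[R]_d) (K : nat),
       seg_setting F L mu zs -> (0 < K)%N ->
       let g1 := Num.min
                   (mu / (10 * Lmax L ^+ 2
                          * Num.sqrt (10 * n%:R ^+ 2 + 2 * n%:R + 54)))
                   (4 * ln (Num.sqrt n%:R * K%:R) / (mu * n%:R * K%:R)) in
       let g2 := 2 * g1 in
       Eperm (fun pi => sqnorm (segso_iter F g1 g2 pi z0 K - zs))
       <= C mu (Lmax L) (sqnorm (z0 - zs)) (sigma2 F zs)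
          * (1 + ln (Num.sqrt n%:R * K%:R)) ^+ p
          * (expR (- (c * mu ^+ 2 * K%:R / Lmax L ^+ 2))
             + (n%:R * K%:R ^+ 2)^-1)).
Proof.
split; [exact: part1 | exact: part2].
Qed.
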